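(* Let $G=(V,E)$ be a finite simple connected graph with $n\ge2$ nodes and $0\le t<\kappa(G)$. For every node $v\in V$ there exists a failure pattern $\varphi\in\Phi^\star_v$ such that no node $u\neq v$ crashes at round $1$ in $\varphi$ and $\mathrm{ecc}(v,\varphi)\ge\mathrm{radius}(G,t)$.
   Context: $\kappa(G)$ is the vertex connectivity of $G$; $N(v)$ is the neighbourhood of $v$. Synchronous rounds; in each round every node sends a message to every neighbour. Failure patterns. A failure pattern is a set $\varphi=\{(v,F_v,f_v): v\in F\}$ with $F\subseteq V$, $|F|\le t$, integers $f_v\ge1$ and nonempty $F_v\subseteq N(v)$: $v$ acts normally in rounds $<f_v$, in round $f_v$ (the round at which $v$ crashes) its messages reach exactly $N(v)\setminus F_v$, and afterwards it sends nothing. Nodes in $F$ are faulty, the others correct. $\Phi^{(t)}_{\mathrm{all}}$ is the set of all failure patterns with at most $t$ faulty nodes. Causal paths, eccentricity, radius. A causal path w.r.t. $\varphi$ from $v$ to $v'$ is $u_1=v,\dots,u_q=v'$ with $u_{i+1}\in N(u_i)$, $u_i$ not crashed during rounds $1,\dots,i-1$, and $u_{i+1}\notin F_{u_i}$ if $u_i$ crashes at round $i$; its length is $q-1$. $\mathrm{ecc}(v,\varphi)$ is the maximum over correct nodes $v'$ of the minimum length of a causal path w.r.t. $\varphi$ from $v$ to $v'$ ($\infty$ if some correct node has none). $\Phi^\star_v=\{\varphi\in\Phi^{(t)}_{\mathrm{all}}:\mathrm{ecc}(v,\varphi)<\infty\}$ and $\mathrm{radius}(G,t)=\min_{v\in V}\max_{\varphi\in\Phi^\star_v}\mathrm{ecc}(v,\varphi)$.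 *)

(* Defs.v *)
From mathcomp Require Import all_boot.
From Stdlib Require Import ClassicalEpsilon.

Set Implicit Arguments.
Unset Strict Implicit.
Unset Printing Implicit Defensive.

Definition is_max_nat (P : nat -> Prop) (m : nat) := P m /\ forall k, P k -> k <= m.
Definition is_min_nat (P : nat -> Prop) (m : nat) := P m /\ forall k, P k -> m <= k.

(* the maximum of P when it exists (0 otherwise, never used) *)
Definition natmax (P : nat -> Prop) : nat :=
  match excluded_middle_informative (exists m, is_max_nat P m) with
  | left H => proj1_sig (constructive_indefinite_description _ H)
  | right _ => 0
  end.

(* the minimum of P when it exists (0 otherwise, never used) *)
Definition natmin (P : nat -> Prop) : nat :=
  match excluded_middle_informative (exists m, is_min_nat P m) with
  | left H => proj1_sig (constructive_indefinite_description _ H)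
  | right _ => 0
  end.

Section Graph.
Variable T : finType.
Variable e : rel T.

Definition nbhd (v : T) : {set T} := [set w | e v w].

Definition del_rel (S : {set T}) : rel T :=
  [rel a b | [&& a \notin S, b \notin S & e a b]].

Definition separating (S : {set T}) : Prop :=
  #|~: S| <= 1 \/
  exists x y, [/\ x \notin S, y \notin S & ~~ connect (del_rel S) x y].

Definition kappa : nat :=
  natmin (fun k => exists S : {set T}, #|S| = k /\ separating S).

(* faulty set F; for v in F: crash round f_v = fp_round v and the set
   F_v = fp_lost v of neighbours NOT reached in round f_v.
   (The values of fp_round / fp_lost outside F are irrelevant.) *)
Record fpat := FPat {
  fp_faulty : {set T};
  fp_round  : T -> nat;
  fp_lost   : T -> {set T}
}.

Definition valid_fpat (t : nat) (phi : fpat) : Prop :=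
  #|fp_faulty phi| <= t /\
  forall v, v \in fp_faulty phi ->
    [/\ 1 <= fp_round phi v, fp_lost phi v != set0 & fp_lost phi v \subset nbhd v].

Definition crashes_at (phi : fpat) (v : T) (r : nat) : bool :=
  (v \in fp_faulty phi) && (fp_round phi v == r).

Definition crashed_by (phi : fpat) (v : T) (r : nat) : bool :=
  (v \in fp_faulty phi) && (fp_round phi v <= r).

(* p = [u_1; ...; u_q]; for i = 1 .. q-1 (0-based index j = i-1):
   u_{i+1} in N(u_i), u_i not crashed during rounds 1..i-1, and
   u_{i+1} \notin F_{u_i} if u_i crashes at round i. *)
Fixpoint causal_from (phi : fpat) (i : nat) (u : T) (s : seq T) : bool :=
  match s with
  | [::] => true
  | w :: s' =>
      [&& e u w, ~~ crashed_by phi u i.-1,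
          crashes_at phi u i ==> (w \notin fp_lost phi u)
        & causal_from phi i.+1 w s']
  end.

(* there is a causal path w.r.t. phi of length k from v to w:
   u_1 = v, [u_2; ...; u_q] = s, u_q = w, k = q - 1 = size s *)
Definition causal_path (phi : fpat) (v w : T) (k : nat) : bool :=
  [exists s : k.-tuple T, causal_from phi 1 v s && (last v s == w)].

Definition cdist (phi : fpat) (v w : T) : option nat :=
  match excluded_middle_informative (exists k, causal_path phi v w k) with
  | left H => Some (ex_minn H)
  | right _ => None
  end.

(* ecc(v, phi): max over correct w of cdist; None encodes infinity *)
Definition ecc (phi : fpat) (v : T) : option nat :=
  if [forall w, (w \notin fp_faulty phi) ==> (cdist phi v w != None)]
  then Some (\max_(w | w \notin fp_faulty phi) odflt 0 (cdist phi v w))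
  else None.

Definition in_PhiStar (t : nat) (v : T) (phi : fpat) : Prop :=
  valid_fpat t phi /\ ecc phi v <> None.

Definition radius (t : nat) : nat :=
  natmin (fun r => exists v : T,
    r = natmax (fun k => exists phi, in_PhiStar t v phi /\ ecc phi v = Some k)).

End Graph.

(* Main.v *)
Require Import Defs.
From mathcomp Require Import all_boot.
From Stdlib Require Import ClassicalEpsilon FunctionalExtensionality.

Set Implicit Arguments.
Unset Strict Implicit.
Unset Printing Implicit Defensive.

Lemma natmin_le (P : nat -> Prop) m : P m -> natmin P <= m.
Proof.
move=> Pm; rewrite /natmin; case: excluded_middle_informative => [H|H].
- case: (constructive_indefinite_description _ H) => x [_ Hx] /=; exact: Hx.
- exfalso; apply: H.
  pose Pb n := if excluded_middle_informative (P n) then true else false.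
  have ex : exists n, Pb n.
    by exists m; rewrite /Pb; case: excluded_middle_informative.
  case: (ex_minnP ex) => x Px Hmin; exists x; split.
    by move: Px; rewrite /Pb; case: excluded_middle_informative.
  by move=> k Pk; apply: Hmin; rewrite /Pb; case: excluded_middle_informative.
Qed.

Section Proof.
Variable T : finType.
Variable e : rel T.

Definition modp (v : T) (phi : fpat T) (u : T) : bool :=
  [&& u \in fp_faulty phi, u != v & fp_round phi u == 1].

Definition phimod (v : T) (phi : fpat T) : fpat T :=
  FPat (fp_faulty phi) (fun u => if modp v phi u then 2 else fp_round phi u)
       (fun u => if modp v phi u then nbhd e u else fp_lost phi u).

Lemma causal_mod v phi i u s : 0 < i -> (i = 1 -> u = v) ->
  causal_from e (phimod v phi) i u s = causal_from e phi i u s.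
Proof.
elim: s i u => [//|w s IH] i u Hi0 Hi /=.
rewrite IH //; last by case: i Hi0 Hi.
rewrite /crashed_by /crashes_at /=.
case Hm: (modp v phi u); last by [].
move: Hm; rewrite /modp => /and3P [Hf Hv /eqP Hr].
rewrite Hf Hr /=.
case: i Hi0 Hi => [|[|[|i]]] Hi0 Hi /=.
- by [].
- by move: Hv; rewrite Hi // eqxx.
- by rewrite inE; case: (e u w).
- by rewrite andbF.
Qed.

Lemma ecc_mod v phi : ecc e (phimod v phi) v = ecc e phi v.
Proof.
have Hcp : forall w, causal_path e (phimod v phi) v w = causal_path e phi v w.
  move=> w; apply: functional_extensionality => k.
  rewrite /causal_path; apply: eq_existsb => s; by rewrite causal_mod.
have Hcd : cdist e (phimod v phi) v = cdist e phi v.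
  apply: functional_extensionality => w; by rewrite /cdist Hcp.
by rewrite /ecc Hcd.
Qed.

Definition phi0 : fpat T := FPat set0 (fun _ => 0) (fun _ => set0).

Lemma causal0 i u s : causal_from e phi0 i u s = path e u s.
Proof.
elim: s i u => [//|w s IH] i u /=.
by rewrite IH /crashed_by /crashes_at inE.
Qed.

End Proof.

Theorem mainTheorem4 (T : finType) (e : rel T)
  (e_sym : symmetric e) (e_irr : irreflexive e)
  (G_conn : forall x y : T, connect e x y)
  (n_ge2 : 2 <= #|T|) (t : nat) (t_lt : t < kappa e) :
  forall v : T, exists phi : fpat T,
    [/\ in_PhiStar e t v phi,
        (forall u : T, u != v -> ~~ crashes_at phi u 1)
      & exists k, ecc e phi v = Some k /\ radius e t <= k].
Proof.
move=> v.
have Hrad : radius e t <= natmax (fun k => exists phi, in_PhiStar e t v phi /\ ecc e phi v = Some k).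
  by rewrite /radius; apply: natmin_le; exists v.
have Hnb : forall u, nbhd e u != set0.
  move=> u.
  have [y Hy] : exists y, y != u.
    apply/existsP; apply: contraTT n_ge2 => /existsPn H.
    have -> : #|T| = #|[set u]|.
      by apply: eq_card => a; rewrite !inE; move: (H a); rewrite negbK => ->.
    by rewrite cards1.
  case/connectP: (G_conn u y) => p; case: p => [_ /= Hyu|w p /= /andP [Hw _] _].
    by move: Hy; rewrite Hyu eqxx.
  by apply/set0Pn; exists w; rewrite inE.
move: Hrad; rewrite /natmax; case: excluded_middle_informative => [H|H].
- case: (constructive_indefinite_description _ H) => m [[phi [[[Hc Hval] Hne] Hecc]] _] /= Hrad.
  exists (phimod e v phi); split.
  + split; last by rewrite ecc_mod.
    split=> //= u Hu; case: (Hval u Hu) => H1 H2 H3.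
    by case: (modp v phi u) => //; split.
  + move=> u Huv; rewrite /crashes_at /=.
    case Hm: (modp v phi u); first by rewrite andbF.
    by move: Hm; rewrite /modp Huv /= => ->.
  + by exists m; rewrite ecc_mod Hecc.
- move=> Hrad.
  have Hne : ecc e (phi0 T) v <> None.
    rewrite /ecc; have -> // : [forall w, (w \notin fp_faulty (phi0 T)) ==> (cdist e (phi0 T) v w != None)].
    apply/forallP => w; apply/implyP => _.
    rewrite /cdist; case: excluded_middle_informative => // Hn.
    exfalso; apply: Hn.
    case/connectP: (G_conn v w) => p Hp Hl.
    exists (size p); apply/existsP; exists (in_tuple p).
    by rewrite /= causal0 Hp Hl eqxx.
  exists (phi0 T); split.
  + split=> //; split=> //=; first by rewrite cards0. by move=> u; rewrite inE.
  + by move=> u _; rewrite /crashes_at inE.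
  + case E: (ecc e (phi0 T) v) => [k|] //; by exists k; split => //; apply: leq_trans Hrad _.
Qed.
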